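(* Let $T$ be an invertible ergodic probability preserving transformation of a standard probability space $(X,\mathcal B,m)$, and let $G$ be an Abelian locally compact second countable group with a topology-generating norm $\|\cdot\|$. Let $g\in G$, let $(\alpha_k)_{k\ge1}$ be measurable partitions of $X$ which approximately generate $\mathcal B$, let $N_k\in\mathbb N$ with $N_k\uparrow\infty$, and let $\varepsilon_k>0$ with $\sum_k\varepsilon_k<\infty$. Suppose that for each $k\in\mathbb N$, $f_k:X\to G$ is measurable, $\sum_{j=1}^k(f_j\circ T-f_j)$ satisfies $\mathrm{EVC}^T(N(g,\varepsilon_k),\varepsilon_k,\alpha_k,N_k)$, and (for $k\ge2$) $m([\|f_k\circ T-f_k\|\ge \varepsilon_{k-1}/N_{k-1}])\le \varepsilon_{k-1}^2/N_{k-1}$. Then $\sum_{k=1}^\infty\|f_k\circ T-f_k\|<\infty$ a.e., and $g\in E\big(\sum_{k=1}^\infty(f_k\circ T-f_k)\big)$.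
   Context: $N(g,\varepsilon)=\{h\in G:\|h-g\|<\varepsilon\}$. For measurable $\varphi:X\to G$, $\varphi_n$ denotes the cocycle ($\varphi_0=0$, $\varphi_n=\sum_{j=0}^{n-1}\varphi\circ T^j$ for $n\ge1$, $\varphi_{-n}=-\varphi_n\circ T^{-n}$). The essential values are $E(\varphi)=\{a\in G:\forall A\in\mathcal B$ with $m(A)>0$, $\forall$ open $U\ni a$, $\exists n\ge1$ with $m(A\cap T^{-n}A\cap[\varphi_n\in U])>0\}$. A partial transformation $R$ in $[T]_+$ is a measure preserving bijection $R:\mathrm{dom}(R)\to\mathrm{Im}(R)$ between measurable subsets of $X$ of the form $Rx=T^{\phi^{(R)}(x)}x$ with measurable $\phi^{(R)}:\mathrm{dom}(R)\to\{1,2,\dots\}$; set $\varphi_R(x)=\varphi_{\phi^{(R)}(x)}(x)$. For a measurable partition $\alpha$, $U\subset G$, $\varepsilon>0$, $N\ge1$: $\varphi$ satisfies $\mathrm{EVC}^T(U,\varepsilon,\alpha,N)$ if the union of those $a\in\alpha$ for which there is $R\in[T]_+$ with $\phi^{(R)}\le N$, $\mathrm{dom}(R),\mathrm{Im}(R)\subset a$, $\varphi_R\in U$ on $\mathrm{dom}(R)$ and $m(a\setminus\mathrm{dom}(R))<\varepsilon m(a)$, has measure $>1-\varepsilon$. Partitions $(\alpha_k)$ approximately generate $\mathcal B$ if for all $B\in\mathcal B$ and $\varepsilon>0$ there is $k_0$ such that for all $k\ge k_0$ some $A_k$ in the algebra generated by $\alpha_k$ has $m(B\triangle A_k)<\varepsilon$.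 *)

(* Defs.v *)
From HB Require Import structures.
From mathcomp Require Import all_boot all_order all_algebra.
From mathcomp Require Import all_classical all_reals all_analysis.
Set Implicit Arguments. Unset Strict Implicit. Unset Printing Implicit Defensive.
Import Order.TTheory GRing.Theory Num.Theory.
Local Open Scope classical_set_scope.
Local Open Scope ring_scope.

Definition is_group_norm (R : realType) (G : zmodType) (nrm : G -> R) : Prop :=
  [/\ forall x, 0 <= nrm x,
      forall x, nrm x = 0 <-> x = 0,
      forall x, nrm (- x) = nrm x &
      forall x y, nrm (x + y) <= nrm x + nrm y].

Definition nball (R : realType) (G : zmodType) (nrm : G -> R) (g : G) (e : R)
  : set G := [set h | nrm (h - g) < e].

Definition nopen (R : realType) (G : zmodType) (nrm : G -> R) (U : set G) : Prop :=
  forall x, U x -> exists2 e, 0 < e & nball nrm x e `<=` U.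

Definition ncompact (R : realType) (G : zmodType) (nrm : G -> R) (K : set G)
  : Prop :=
  forall (I : Type) (V : I -> set G), (forall i, nopen nrm (V i)) ->
    K `<=` \bigcup_i V i ->
    exists J : set I, finite_set J /\ K `<=` \bigcup_(i in J) V i.

Definition nlocally_compact (R : realType) (G : zmodType) (nrm : G -> R) : Prop :=
  forall x : G, exists2 K, ncompact nrm K &
    exists2 e, 0 < e & nball nrm x e `<=` K.

Definition nsecond_countable (R : realType) (G : zmodType) (nrm : G -> R)
  : Prop :=
  exists B : nat -> set G, (forall n, nopen nrm (B n)) /\
    forall U, nopen nrm U -> forall x, U x -> exists n, B n x /\ B n `<=` U.

Definition lcsc_normed_group (R : realType) (G : zmodType) (nrm : G -> R)
  : Prop :=
  [/\ is_group_norm nrm, nlocally_compact nrm & nsecond_countable nrm].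

Definition nmeasurable d (X : measurableType d) (R : realType) (G : zmodType)
  (nrm : G -> R) (phi : X -> G) : Prop :=
  forall U, nopen nrm U -> measurable (phi @^-1` U).

Definition nconverges (R : realType) (G : zmodType) (nrm : G -> R)
  (u : nat -> G) (l : G) : Prop :=
  forall e, 0 < e -> exists n0, forall n, (n0 <= n)%N -> nrm (u n - l) < e.

(* standard Borel space: Borel isomorphic to a Borel subset of the reals *)
Definition standard_borel d (X : measurableType d) (R : realType) : Prop :=
  exists f : X -> R, [/\ injective f, measurable_fun setT f &
    forall A, measurable A -> measurable (f @` A)].

Definition invertible_mpt d (X : measurableType d) (R : realType)
  (m : {measure set X -> \bar R}) (T : X -> X) : Prop :=
  [/\ measurable_fun setT T,
      (exists Tinv : X -> X, [/\ measurable_fun setT Tinv, cancel T Tinv &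
                                 cancel Tinv T]) &
      forall A, measurable A -> m (T @^-1` A) = m A].

Definition ergodic d (X : measurableType d) (R : realType)
  (m : {measure set X -> \bar R}) (T : X -> X) : Prop :=
  forall A, measurable A -> T @^-1` A = A -> m A = 0%E \/ m A = 1%E.

Definition cocycle (X : Type) (G : zmodType) (T : X -> X) (phi : X -> G)
  (n : nat) (x : X) : G := \sum_(j < n) phi (iter j T x).

Definition essential_value d (X : measurableType d) (R : realType)
  (m : {measure set X -> \bar R}) (T : X -> X) (G : zmodType) (nrm : G -> R)
  (phi : X -> G) (a : G) : Prop :=
  forall A, measurable A -> (0 < m A)%E ->
  forall U, nopen nrm U -> U a ->
  exists2 n, (1 <= n)%N &
    (0 < m (A `&` (iter n T @^-1` A) `&` [set x | U (cocycle T phi n x)]))%E.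

Definition ptmap (X : Type) (T : X -> X) (psi : X -> nat) (x : X) : X :=
  iter (psi x) T x.

(* (D, psi) describes a partial transformation R in [T]_+ with dom(R) = D,
   phi^(R) = psi (on D) and Im(R) = R @` D *)
Definition partial_transf d (X : measurableType d) (R : realType)
  (m : {measure set X -> \bar R}) (T : X -> X) (D : set X) (psi : X -> nat)
  : Prop :=
  [/\ measurable D,
      forall n, measurable (D `&` psi @^-1` [set n]),
      forall x, D x -> (1 <= psi x)%N,
      forall x y, D x -> D y -> ptmap T psi x = ptmap T psi y -> x = y &
      forall B, measurable B -> B `<=` D ->
        measurable (ptmap T psi @` B) /\ m (ptmap T psi @` B) = m B].

(* measurable (countable) partitions, indexed by nat (empty atoms allowed) *)
Definition mpartition d (X : measurableType d) (alpha : nat -> set X) : Prop :=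
  [/\ forall i, measurable (alpha i),
      forall i j, i <> j -> alpha i `&` alpha j = set0 &
      \bigcup_i alpha i = setT].

Definition EVC d (X : measurableType d) (R : realType)
  (m : {measure set X -> \bar R}) (T : X -> X) (G : zmodType)
  (phi : X -> G) (U : set G) (eps : R) (alpha : nat -> set X) (N : nat)
  : Prop :=
  let good i := exists D psi, partial_transf m T D psi /\
      (forall x, D x -> (psi x <= N)%N) /\
      D `<=` alpha i /\ ptmap T psi @` D `<=` alpha i /\
      (forall x, D x -> U (cocycle T phi (psi x) x)) /\
      (m (alpha i `\` D) < eps%:E * m (alpha i))%E in
  ((1 - eps)%:E < m (\bigcup_(i in good) alpha i))%E.

Definition partition_algebra (X : Type) (alpha : nat -> set X) (A : set X)
  : Prop :=
  exists I : set nat, (finite_set I \/ finite_set (~` I)) /\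
                      A = \bigcup_(i in I) alpha i.

Definition approx_generate d (X : measurableType d) (R : realType)
  (m : {measure set X -> \bar R}) (alpha : nat -> nat -> set X) : Prop :=
  forall B, measurable B -> forall e : R, 0 < e ->
  exists k0, forall k, (k0 <= k)%N ->
    exists A, partition_algebra (alpha k) A /\
              (m ((B `\` A) `|` (A `\` B)) < e%:E)%E.

(* Main.v *)
Require Import Defs.
From HB Require Import structures.
From mathcomp Require Import all_boot all_order all_algebra.
From mathcomp Require Import all_classical all_reals all_analysis.
From mathcomp Require Import zify ring lra.
Import Order.TTheory GRing.Theory Num.Theory.
Local Open Scope classical_set_scope.
Local Open Scope ring_scope.
Set Implicit Arguments. Unset Strict Implicit. Unset Printing Implicit Defensive.
Section NormLemmas.
Context (R : realType) (G : zmodType) (nrm : G -> R) (Hn : is_group_norm nrm).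

Lemma nrm_ge0 x : 0 <= nrm x. Proof. by case: Hn. Qed.
Lemma nrm0 : nrm 0 = 0. Proof. by case: Hn => _ H _ _; apply/H. Qed.
Lemma nrmN x : nrm (- x) = nrm x. Proof. by case: Hn. Qed.
Lemma nrmD x y : nrm (x + y) <= nrm x + nrm y. Proof. by case: Hn. Qed.
Lemma nrmB x y : nrm (x - y) = nrm (y - x).
Proof. by rewrite -nrmN opprB. Qed.
Lemma nrm_tri x y z : nrm (x - z) <= nrm (x - y) + nrm (y - z).
Proof. by rewrite (_ : x - z = (x - y) + (y - z)) ?nrmD // addrA subrK. Qed.

Lemma nball_open y r : nopen nrm (nball nrm y r).
Proof.
move=> x; rewrite /nball /= => hx; exists (r - nrm (x - y)); first by rewrite subr_gt0.
move=> z; rewrite /nball /= ltrBrDr => hz.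
exact: le_lt_trans (nrm_tri z x y) hz.
Qed.

Lemma nball_center y r : 0 < r -> nball nrm y r y.
Proof. by move=> r0; rewrite /nball /= subrr nrm0. Qed.

Lemma nrm_sum (I : Type) (s : seq I) (F : I -> G) :
  nrm (\sum_(i <- s) F i) <= \sum_(i <- s) nrm (F i).
Proof.
elim: s => [|a s IH]; first by rewrite !big_nil nrm0.
rewrite !big_cons; apply: le_trans (nrmD _ _) _; exact: lerD.
Qed.

End NormLemmas.
Arguments nball_open {R G nrm} Hn y r.
Arguments nball_center {R G nrm} Hn y {r}.

Section MeasLemmas.
Context d (X : measurableType d) (R : realType) (G : zmodType) (nrm : G -> R)
  (Hn : is_group_norm nrm) (sc : nsecond_countable nrm).

Lemma nmeas_add (a b : X -> G) : nmeasurable nrm a -> nmeasurable nrm b ->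
  nmeasurable nrm (fun x => a x + b x).
Proof.
move=> ma mb U oU; case: sc => B [oB HB].
pose P n k := forall u v, B n u -> B k v -> U (u + v).
have -> : (fun x => a x + b x) @^-1` U =
    \bigcup_n \bigcup_(k in [set k | P n k]) (a @^-1` B n `&` b @^-1` B k).
  apply/seteqP; split.
  - move=> x /= Ux; have [e e0 He] := oU _ Ux.
    have e20 : 0 < e / 2 by rewrite divr_gt0.
    have [n [Bn Bsub]] := HB _ (nball_open Hn (a x) (e/2)) (a x) (nball_center Hn _ e20).
    have [k [Bk Bsub']] := HB _ (nball_open Hn (b x) (e/2)) (b x) (nball_center Hn _ e20).
    exists n => //; exists k => //=.
    move=> u v Bu Bv; apply: He; rewrite /nball /=.
    have := Bsub _ Bu; have := Bsub' _ Bv; rewrite /nball /= => hv hu.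
    rewrite (_ : u + v - (a x + b x) = (u - a x) + (v - b x)); last by rewrite opprD addrACA.
    apply: le_lt_trans (nrmD Hn _ _) _; rewrite (splitr e); exact: ltrD.
  - by move=> x [n _ [k Pnk [/= Bn Bk]]]; exact: Pnk.
apply: bigcup_measurable => n _; apply: bigcup_measurable => k _.
by apply: measurableI; [exact: ma|exact: mb].
Qed.

Lemma nmeas_opp (a : X -> G) : nmeasurable nrm a -> nmeasurable nrm (fun x => - a x).
Proof.
move=> ma U oU.
have -> : (fun x => - a x) @^-1` U = a @^-1` [set y | U (- y)] by [].
apply: ma => y /= Uy; have [e e0 He] := oU _ Uy; exists e => // z; rewrite /nball /= => hz.
by apply: He; rewrite /nball /= -opprD nrmN.
Qed.

Lemma nmeas_sub (a b : X -> G) : nmeasurable nrm a -> nmeasurable nrm b ->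
  nmeasurable nrm (fun x => a x - b x).
Proof. by move=> ma mb; apply: nmeas_add => //; exact: nmeas_opp. Qed.

Lemma nmeas_cst (c : G) : nmeasurable nrm (fun _ : X => c).
Proof.
move=> U oU; case: (pselect (U c)) => h.
  by rewrite (_ : _ @^-1` U = setT); [exact: measurableT | apply/seteqP; split => x].
by rewrite (_ : _ @^-1` U = set0); [exact: measurable0 | apply/seteqP; split => x].
Qed.

Lemma nmeas_comp (F : X -> X) (a : X -> G) : measurable_fun setT F ->
  nmeasurable nrm a -> nmeasurable nrm (fun x => a (F x)).
Proof.
move=> mF ma U oU; have := mF measurableT _ (ma U oU); by rewrite setTI.
Qed.

Lemma nmeas_sum n (F : nat -> X -> G) : (forall i, nmeasurable nrm (F i)) ->
  nmeasurable nrm (fun x => \sum_(i < n) F i x).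
Proof.
move=> mF; elim: n => [|n IH].
  have -> : (fun x => \sum_(i < 0) F i x) = fun=> 0 by apply/funext => x; rewrite big_ord0.
  exact: nmeas_cst.
have -> : (fun x => \sum_(i < n.+1) F i x) = fun x => \sum_(i < n) F i x + F n x.
  by apply/funext => x; rewrite big_ord_recr.
exact: nmeas_add.
Qed.

Lemma iter_meas (F : X -> X) n : measurable_fun setT F -> measurable_fun setT (iter n F).
Proof.
move=> mF; elim: n => [|n IH]; first exact: measurable_id.
have -> : iter n.+1 F = F \o iter n F by apply/funext => x; rewrite iterS.
exact: measurableT_comp.
Qed.

Lemma cocycle_meas (F : X -> X) (phi : X -> G) n : measurable_fun setT F ->
  nmeasurable nrm phi -> nmeasurable nrm (cocycle F phi n).
Proof.
move=> mF mphi; rewrite /cocycle.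
apply: (@nmeas_sum n (fun j x => phi (iter j F x))) => j.
by apply: nmeas_comp => //; exact: iter_meas.
Qed.

Lemma nmeas_ge (a : X -> G) c : nmeasurable nrm a ->
  measurable [set x | c <= nrm (a x)].
Proof.
move=> ma; rewrite (_ : [set x | _] = ~` (a @^-1` nball nrm 0 c)).
  by apply: measurableC; exact: ma _ (nball_open Hn 0 c).
apply/seteqP; split => x /=; rewrite /nball /= subr0.
  by rewrite leNgt => /negP.
by move/negP; rewrite -leNgt.
Qed.

End MeasLemmas.
Section Complete.
Context (R : realType) (G : zmodType) (nrm : G -> R)
  (Hn : is_group_norm nrm) (lc : nlocally_compact nrm).

Lemma ncauchy_cvg (u : nat -> G) :
  (forall e, 0 < e -> exists n0, forall p q, (n0 <= p)%N -> (p <= q)%N -> nrm (u q - u p) < e) ->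
  exists l, nconverges nrm u l.
Proof.
move=> Hc; have [K cK [e0 e00 He0]] := lc 0.
have [n0 Hn0] := Hc _ e00.
pose t n := u (n0 + n)%N - u n0.
have tK n : K (t n).
  by apply: He0; rewrite /nball /= subr0; apply: Hn0 => //; rewrite leq_addr.
have tC e : 0 < e -> exists M, forall p q, (M <= p)%N -> (M <= q)%N -> nrm (t q - t p) < e.
  move=> e0'; have [n1 H1] := Hc _ e0'; exists n1 => p q hp hq.
  have -> : t q - t p = u (n0 + q)%N - u (n0 + p)%N.
    by rewrite /t opprB addrA subrK.
  case: (leqP p q) => hpq.
    by apply: H1; lia.
  by rewrite nrmB //; apply: H1; lia.
suff [y ty] : exists y, nconverges nrm t y.
  exists (y + u n0) => e e1; have [M HM] := ty e e1; exists (n0 + M)%N => n hn.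
  have := HM (n - n0)%N ltac:(lia); rewrite /t subnKC; last by lia.
  by rewrite opprD addrA addrAC.
case: (pselect (exists y, nconverges nrm t y)) => // Hno; exfalso.
have Hy y : exists p : R * nat, 0 < p.1 /\ forall n, (p.2 <= n)%N -> p.1 <= nrm (t n - y).
  have H : ~ nconverges nrm t y by move=> h; apply: Hno; exists y.
  case: (pselect (exists e, 0 < e /\ forall n0, exists n, (n0 <= n)%N /\ e <= nrm (t n - y)))
    => [[e [e1 He]]|H2]; last first.
    exfalso; apply: H => e e1.
    case: (pselect (exists n0, forall n, (n0 <= n)%N -> nrm (t n - y) < e)) => // H3.
    exfalso; apply: H2; exists e; split => // n1.
    case: (pselect (exists n, (n1 <= n)%N /\ e <= nrm (t n - y))) => // H4.
    exfalso; apply: H3; exists n1 => n hn.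
    by rewrite ltNge; apply/negP => hle; apply: H4; exists n.
  have e20 : 0 < e / 2 by rewrite divr_gt0.
  have [M HM] := tC _ e20.
  exists (e / 2, M); split => //= n hn.
  have [n' [hn' hle]] := He n.
  have h1 := HM n n' hn (leq_trans hn hn').
  have h2 := nrm_tri Hn (t n') (t n) y.
  rewrite -(lerD2l (e / 2)) -splitr.
  apply: (le_trans hle); apply: (le_trans h2); apply: lerD => //.
  exact: ltW.
have [rM HrM] := choice Hy.
have cov0 : K `<=` \bigcup_i nball nrm i (rM i).1.
  by move=> k _; exists k => //; exact: (nball_center Hn k (proj1 (HrM k))).
have [J [fJ cov]] := cK G (fun y => nball nrm y (rM y).1) (fun y => nball_open Hn y _) cov0.
pose M := (\max_(y <- finmap.enum_fset (fset_set J)) (rM y).2)%N.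
have [y Jy Vy] := cov _ (tK M).
have : ((rM y).2 <= M)%N.
  by apply: (@leq_bigmax_seq _ _ xpredT (fun y => (rM y).2)) => //; rewrite in_fset_set // inE.
move/(proj2 (HrM y)); rewrite leNgt => /negP; apply; exact: Vy.
Qed.
End Complete.
Lemma exists_inv_lt (R : realType) (e : R) : 0 < e -> exists j : nat, j.+1%:R^-1 < e.
Proof.
move=> e0; have := near_infty_natSinv_lt (PosNum e0).
rewrite /prop_near1 /nbhs /= => -[N _ HN]; exists N; by apply: HN => /=.
Qed.

Section LimMeas.
Context d (X : measurableType d) (R : realType) (G : zmodType) (nrm : G -> R)
  (Hn : is_group_norm nrm).

Lemma nmeas_lim (u : nat -> X -> G) (L : X -> G) (Z : set X) :
  (forall n, nmeasurable nrm (u n)) -> measurable Z ->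
  (forall x, ~ Z x -> nconverges nrm (fun n => u n x) (L x)) ->
  nmeasurable nrm (fun x => if pselect (Z x) then 0 else L x).
Proof.
move=> mu mZ cv U oU.
pose r (j : nat) : R := j.+1%:R^-1.
have r0 j : 0 < r j by rewrite /r invr_gt0 ltr0n.
pose O j := [set z | exists y, nball nrm y (r j + r j) `<=` U /\ nrm (z - y) < r j].
have oO j : nopen nrm (O j).
  move=> z [y [Hy hz]]; exists (r j - nrm (z - y)); first by rewrite subr_gt0.
  move=> z'; rewrite /nball /= ltrBrDr => hz'; exists y; split => //.
  exact: le_lt_trans (nrm_tri Hn z' z y) hz'.
have key x : ~ Z x -> (U (L x) <-> exists j n, forall k, (n <= k)%N -> O j (u k x)).
  move=> zx; split.
    move=> ULx; have [e e0 He] := oU _ ULx.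
    have e20 : 0 < e / 2 by rewrite divr_gt0.
    have [j hj] := exists_inv_lt e20.
    have [n hn] := cv x zx _ (r0 j).
    exists j, n => k hk; exists (L x); split; last exact: hn.
    move=> z; rewrite /nball /= => hz; apply: He; rewrite /nball /=.
    apply: (lt_le_trans hz); rewrite (splitr e); apply: lerD; exact: ltW.
  move=> [j [n Hjn]].
  have [n1 hn1] := cv x zx _ (r0 j).
  have [y [Hy hy]] := Hjn (maxn n n1) (leq_maxl _ _).
  apply: Hy; rewrite /nball /=.
  apply: le_lt_trans (nrm_tri Hn (L x) (u (maxn n n1) x) y) _.
  apply: ltrD => //; rewrite nrmB //; apply: hn1; exact: leq_maxr.
have -> : (fun x => if pselect (Z x) then 0 else L x) @^-1` U =
    (Z `&` [set _ | U 0]) `|`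
    (~` Z `&` \bigcup_j \bigcup_n \bigcap_(k in [set k | (n <= k)%N]) (u k @^-1` O j)).
  apply/seteqP; split => x /=; case: (pselect (Z x)) => zx /=.
  - by move=> h; left.
  - move=> h; right; split => //; have [j [n H]] := (key x zx).1 h.
    by exists j => //; exists n => // k; exact: H.
  - by case=> [[]|[]].
  - case=> [[]|[_ [j _ [n _ H]]]] //; apply/(key x zx).2; exists j, n => k hk.
    exact: H.
apply: measurableU.
  apply: measurableI => //; case: (pselect (U 0)) => h.
    by rewrite (_ : [set _ | U 0] = setT); [exact: measurableT|apply/seteqP; split].
  by rewrite (_ : [set _ | U 0] = set0); [exact: measurable0|apply/seteqP; split].
apply: measurableI; first exact: measurableC.
apply: bigcup_measurable => j _; apply: bigcup_measurable => n _.
apply: bigcap_measurableType => k _; exact: mu.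
Qed.

End LimMeas.
Section Series.
Context (R : realType).
Local Open Scope ereal_scope.

Lemma series_le (a : nat -> R) N (B : R) : (forall k, (0 <= a k)%R) ->
  (forall M, (\sum_(N <= k < M) a k <= B)%R) ->
  \sum_(N <= k <oo) (a k)%:E <= B%:E.
Proof.
move=> a0 HB; apply: lime_le.
  by apply: is_cvg_nneseries => k _ _; rewrite lee_fin.
by apply: nearW => M; rewrite sumEFin lee_fin.
Qed.

Lemma partial_le_series (a : nat -> R) N M : (forall k, (0 <= a k)%R) ->
  (\sum_(N <= k < M) a k)%:E <= \sum_(N <= k <oo) (a k)%:E.
Proof.
move=> a0; rewrite -sumEFin; apply: nneseries_lim_ge => k _ _; by rewrite lee_fin.
Qed.

Lemma series_fin (a : nat -> R) : (forall k, (0 <= a k)%R) ->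
  \sum_(0 <= k <oo) (a k)%:E < +oo ->
  \sum_(0 <= k <oo) (a k)%:E = (fine (\sum_(0 <= k <oo) (a k)%:E))%:E.
Proof.
move=> a0 fin; rewrite fineK // ge0_fin_numE //.
by apply: nneseries_ge0 => k _ _; rewrite lee_fin.
Qed.

Lemma partial_le_S (a : nat -> R) M : (forall k, (0 <= a k)%R) ->
  \sum_(0 <= k <oo) (a k)%:E < +oo ->
  (\sum_(0 <= k < M) a k <= fine (\sum_(0 <= k <oo) (a k)%:E))%R.
Proof.
move=> a0 fin; rewrite -lee_fin -series_fin //; exact: partial_le_series.
Qed.

Lemma tail_small (a : nat -> R) : (forall k, (0 <= a k)%R) ->
  \sum_(0 <= k <oo) (a k)%:E < +oo ->
  forall eta : R, (0 < eta)%R -> exists N, forall p q, (N <= p)%N ->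
    (\sum_(p <= k < q) a k < eta)%R.
Proof.
move=> a0 fin eta eta0; set S := fine (\sum_(0 <= k <oo) (a k)%:E).
have [N HN] : exists N, (S - eta < \sum_(0 <= k < N) a k)%R.
  apply/not_existsP => H.
  have : \sum_(0 <= k <oo) (a k)%:E <= (S - eta)%:E.
    by apply: series_le => // M; rewrite leNgt; apply/negP => h; apply: (H M).
  rewrite series_fin // lee_fin -/S => h.
  by move: h eta0; clear; lra.
exists N => p q Np.
case: (leqP q p) => hqp; first by rewrite big_geq.
have e1 := partial_le_S q a0 fin.
rewrite (big_cat_nat (leq0n p) (ltnW hqp)) /= in e1.
have e2 : (\sum_(0 <= k < N) a k <= \sum_(0 <= k < p) a k)%R.
  rewrite (big_cat_nat (leq0n N) Np) /= lerDl.
  by apply: sumr_ge0 => i _.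
move: e1 e2 HN; rewrite -/S; clear; lra.
Qed.
End Series.
Lemma div_nat_le (R : realType) (x : R) (n : nat) : 0 <= x -> (0 < n)%N -> x / n%:R <= x.
Proof.
move=> x0 n0; rewrite ler_pdivrMr ?ltr0n //.
by rewrite ler_peMr // (_ : 1 = 1%:R) // ler_nat.
Qed.

Lemma fin_ineq (R : realType) (a b e eta r : R) :
  0 < eta -> a <= eta -> b < e -> e < eta -> eta <= r / 3 -> a + b < r.
Proof. lra. Qed.

Section Main.
Context d (X : measurableType d) (R : realType) (m : probability X R) (T : X -> X)
  (G : zmodType) (nrm : G -> R) (g : G)
  (alpha : nat -> nat -> set X) (N : nat -> nat) (eps : nat -> R)
  (f : nat -> X -> G).
Hypotheses (Hn : is_group_norm nrm) (sc : nsecond_countable nrm)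
  (lc : nlocally_compact nrm) (mT : measurable_fun setT T)
  (mpT : forall A, measurable A -> m (T @^-1` A) = m A)
  (Npos : forall k, (0 < N k)%N) (Nmono : {homo N : a b / (a <= b)%N})
  (eps0 : forall k, 0 < eps k) (epsfin : (\sum_(0 <= k <oo) (eps k)%:E < +oo)%E)
  (mf : forall k, nmeasurable nrm (f k))
  (hbad : forall k, (m [set x | (eps k / (N k)%:R <= nrm (f k.+1 (T x) - f k.+1 x))%R]
              <= (eps k ^+ 2 / (N k)%:R)%:E)%E).

Definition h k x := f k (T x) - f k x.
Definition s n x := \sum_(k < n) h k x.
Definition Sbad j := [set x | eps j / (N j)%:R <= nrm (h j.+1 x)].
Definition Stot := fine (\sum_(0 <= k <oo) (eps k)%:E).

Lemma eps_ge0 k : 0 <= eps k. Proof. exact: ltW. Qed.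

Lemma mh k : nmeasurable nrm (h k).
Proof. by apply: nmeas_sub => //; apply: nmeas_comp. Qed.

Lemma ms n : nmeasurable nrm (s n).
Proof. by apply: nmeas_sum => // k; exact: mh. Qed.

Lemma mSbad j : measurable (Sbad j).
Proof. exact: (nmeas_ge Hn (eps j / (N j)%:R) (mh j.+1)). Qed.

Lemma m_iter i A : measurable A -> m (iter i T @^-1` A) = m A.
Proof.
elim: i A => [|i IH] A mA //.
have -> : iter i.+1 T @^-1` A = iter i T @^-1` (T @^-1` A) by [].
rewrite IH ?mpT //; have := mT measurableT mA; by rewrite setTI.
Qed.

Lemma meas_iter i A : measurable A -> measurable (iter i T @^-1` A).
Proof. by move=> mA; have := iter_meas i mT measurableT mA; rewrite setTI. Qed.

Lemma eps_leS k : eps k <= Stot.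
Proof.
apply: (le_trans _ (partial_le_S k.+1 eps_ge0 epsfin)).
rewrite big_nat_recr //= lerDr; apply: sumr_ge0 => i _; exact: eps_ge0.
Qed.

Lemma mfin A : measurable A -> m A = (fine (m A))%:E.
Proof. by move=> mA; rewrite fineK // fin_num_measure. Qed.

Lemma s_diff x p q : (p <= q)%N ->
  s q.+1 x - s p.+1 x = \sum_(p <= j < q) h j.+1 x.
Proof.
move=> pq; rewrite /s !big_ord_recl -!(big_mkord xpredT (fun j => h (bump 0 j) x)).
rewrite (big_cat_nat (leq0n p) pq) /=.
by rewrite opprD addrACA subrr add0r addrAC subrr add0r.
Qed.

Lemma tail_est x p q : (forall j, (p <= j)%N -> nrm (h j.+1 x) < eps j / (N j)%:R) ->
  (p <= q)%N -> nrm (s q.+1 x - s p.+1 x) <= (\sum_(p <= j < q) eps j) / (N p)%:R.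
Proof.
move=> Hg pq; rewrite s_diff //.
apply: le_trans; first exact: (nrm_sum Hn).
rewrite mulr_suml; apply: ler_sum_nat => j /andP [pj _].
apply: le_trans (ltW (Hg j pj)) _.
apply: ler_wpM2l; first exact: eps_ge0.
rewrite lef_pV2 ?posrE ?ltr0n // ler_nat; exact: Nmono.
Qed.


Definition Z0 := lim_sup_set Sbad.

Lemma mZ0 : measurable Z0.
Proof.
apply: bigcap_measurableType => n _; apply: bigcup_measurable => j _; exact: mSbad.
Qed.

Lemma Stot_ge0 : 0 <= Stot.
Proof. exact: le_trans (eps_ge0 0) (eps_leS 0). Qed.

Lemma Z0null : m Z0 = 0%E.
Proof.
apply: lim_sup_set_cvg0; first exact: mSbad.
have H1 : (\sum_(0 <= n <oo) m (Sbad n) <= \sum_(0 <= n <oo) (Stot * eps n)%:E)%E.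
  apply: lee_nneseries => [n _ _|n _]; first exact: measure_ge0.
  apply: le_trans; first exact: hbad n.
  rewrite lee_fin; apply: le_trans (div_nat_le _ _) _.
  - by rewrite exprn_ge0 // eps_ge0.
  - exact: Npos.
  - by rewrite expr2 ler_wpM2r ?eps_ge0 // eps_leS.
have H2 : (\sum_(0 <= n <oo) (Stot * eps n)%:E <= (Stot * Stot)%:E)%E.
  apply: series_le => [n|M]; first by rewrite mulr_ge0 ?Stot_ge0 ?eps_ge0.
  rewrite -mulr_sumr ler_wpM2l ?Stot_ge0 //; exact: partial_le_S eps_ge0 epsfin.
by apply: le_lt_trans (le_trans H1 H2) _; rewrite ltry.
Qed.

Lemma notZ0 x : ~ Z0 x -> exists n, forall j, (n <= j)%N -> nrm (h j.+1 x) < eps j / (N j)%:R.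
Proof.
move=> nz.
have [n Hn'] : exists n, ~ (\bigcup_(j >= n) Sbad j) x.
  apply/existsNP => H; apply: nz => n _; exact: H.
exists n => j hj; rewrite ltNge; apply/negP => hle; apply: Hn'; exists j => //.
Qed.

Lemma sum_fin x : ~ Z0 x -> (\sum_(0 <= k <oo) (nrm (h k x))%:E < +oo)%E.
Proof.
move=> nz; have [n Hg] := notZ0 nz.
pose B := nrm (h 0 x) + \sum_(0 <= k < n) nrm (h k.+1 x) + Stot.
have Bs : 0 <= \sum_(0 <= k < n) nrm (h k.+1 x) by apply: sumr_ge0 => i _; exact: nrm_ge0.
apply: (@le_lt_trans _ _ B%:E); last by rewrite ltry.
apply: series_le => [k|M]; first exact: nrm_ge0.
case: M => [|M].
  rewrite big_geq // /B; apply: addr_ge0; last exact: Stot_ge0.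
  by apply: addr_ge0 => //; exact: nrm_ge0.
rewrite big_nat_recl //= /B -addrA lerD2l.
case: (leqP M n) => hMn.
  rewrite (big_cat_nat (leq0n M) hMn) /= -addrA lerDl addr_ge0 ?Stot_ge0 //.
  by apply: sumr_ge0 => i _; exact: nrm_ge0.
rewrite (big_cat_nat (leq0n n) (ltnW hMn)) /= lerD2l.
apply: (@le_trans _ _ (\sum_(n <= k < M) eps k)).
  apply: ler_sum_nat => k /andP [nk _]; apply: le_trans (ltW (Hg k nk)) _.
  exact: div_nat_le (eps_ge0 k) (Npos k).
apply: le_trans (partial_le_S M eps_ge0 epsfin).
rewrite (big_cat_nat (leq0n n) (ltnW hMn)) /= lerDr.
by apply: sumr_ge0 => i _; exact: eps_ge0.
Qed.

Lemma conv_s x : ~ Z0 x -> exists l, nconverges nrm (fun n => s n x) l.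
Proof.
move=> nz; have [n Hg] := notZ0 nz.
have [l Hl] : exists l, nconverges nrm (fun p => s p.+1 x) l.
  apply: (ncauchy_cvg Hn lc) => e e0.
  have [N1 HN1] := tail_small eps_ge0 epsfin e0.
  exists (maxn n N1) => p q hp hq.
  have Hgp : forall j, (p <= j)%N -> nrm (h j.+1 x) < eps j / (N j)%:R.
    move=> j hj; apply: Hg; apply: leq_trans hj; exact: leq_trans (leq_maxl _ _) hp.
  apply: le_lt_trans (tail_est Hgp hq) _.
  apply: le_lt_trans (div_nat_le _ (Npos p)) _.
    by apply: sumr_ge0 => i _; exact: eps_ge0.
  apply: HN1; exact: leq_trans (leq_maxr _ _) hp.
exists l => e e0; have [n1 H1] := Hl e e0; exists n1.+1 => k hk.
by case: k hk => // k hk; exact: H1.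
Qed.

Hypotheses (Hpart : forall k, mpartition (alpha k)) (HAg : approx_generate m alpha)
  (evc : forall k, EVC m T (fun x => \sum_(j < k.+1) (f j (T x) - f j x))
                 (nball nrm g (eps k)) (eps k) (alpha k) (N k)).

Definition goodk k i := exists (D : set X) (psi : X -> nat), partial_transf m T D psi /\
  (forall x, D x -> (psi x <= N k)%N) /\ D `<=` alpha k i /\
  ptmap T psi @` D `<=` alpha k i /\
  (forall x, D x -> nball nrm g (eps k) (cocycle T (s k.+1) (psi x) x)) /\
  (m (alpha k i `\` D) < (eps k)%:E * m (alpha k i))%E.

Lemma meas_RS D psi S : partial_transf m T D psi -> measurable S ->
  measurable (D `&` [set x | S (ptmap T psi x)]).
Proof.
case=> mD mDpsi _ _ _ mS.
have -> : D `&` [set x | S (ptmap T psi x)] =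
    \bigcup_n ((D `&` psi @^-1` [set n]) `&` (iter n T @^-1` S)).
  apply/seteqP; split => [x [Dx Sx]|x [n _ [[Dx /= pn] Sx]]].
    by exists (psi x) => //.
  by split => //; rewrite /ptmap pn.
apply: bigcup_measurable => n _; apply: measurableI; first exact: mDpsi.
exact: meas_iter.
Qed.

Lemma phi_close (phi : X -> G) (Zc : set X) k y (eta : R) :
  (forall x, ~ Zc x -> nconverges nrm (fun n => s n x) (phi x)) -> ~ Zc y ->
  (forall j, (k <= j)%N -> nrm (h j.+1 y) < eps j / (N j)%:R) ->
  (forall q, \sum_(k <= j < q) eps j <= eta) ->
  nrm (phi y - s k.+1 y) <= eta / (N k)%:R.
Proof.
move=> cv nz Hg Ht; apply/ler_addgt0Pr => e e0.
have [n1 H1] := cv y nz e e0.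
pose q := maxn k n1.
have t1 := tail_est Hg (leq_maxl k n1).
have t2 : (\sum_(k <= j < q) eps j) / (N k)%:R <= eta / (N k)%:R.
  by rewrite ler_wpM2r // invr_ge0 ler0n.
have c1 := H1 q.+1 (leq_trans (leq_maxr k n1) (leqnSn _)).
apply: le_trans (nrm_tri Hn _ (s q.+1 y) _) _.
rewrite nrmB // addrC; apply: lerD; last exact: ltW.
exact: le_trans t1 t2.
Qed.

Lemma cocycle_close (phi : X -> G) k n x c :
  (forall i, (i < n)%N -> nrm (phi (iter i T x) - s k.+1 (iter i T x)) <= c) ->
  nrm (cocycle T phi n x - cocycle T (s k.+1) n x) <= c *+ n.
Proof.
move=> H; rewrite /cocycle -sumrB.
apply: le_trans; first exact: (nrm_sum Hn).
apply: (@le_trans _ _ (\sum_(i < n) c)).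
  by apply: ler_sum => i _; exact: H i (ltn_ord i).
by rewrite sumr_const card_ord.
Qed.


Lemma mU2 (A B : set X) : measurable A -> measurable B -> (m (A `|` B) <= m A + m B)%E.
Proof. exact: measureU2. Qed.

Lemma mU (A B : set X) : measurable A -> measurable B -> A `&` B = set0 ->
  m (A `|` B) = (m A + m B)%E.
Proof. exact: measureU. Qed.

Lemma mle (A B : set X) : measurable A -> measurable B -> A `<=` B -> (m A <= m B)%E.
Proof. by move=> mA mB AB; apply: le_measure => //; rewrite inE. Qed.

Lemma mbigcup (P : set nat) (F : nat -> set X) : (forall i, P i -> measurable (F i)) ->
  trivIset P F -> m (\bigcup_(n in P) F n) = (\sum_(i <oo | i \in P) m (F i))%E.
Proof. exact: measure_bigcup. Qed.

Lemma partC (phi : X -> G) : nmeasurable nrm phi ->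
  {ae m, forall x, nconverges nrm (fun n => s n x) (phi x)} ->
  essential_value m T nrm phi g.
Proof.
move=> mphi [Zc [mZc Zc0 HZc]] A mA mA0 U oU Ug.
have cv x : ~ Zc x -> nconverges nrm (fun n => s n x) (phi x).
  move=> nz; case: (pselect (nconverges nrm (fun n => s n x) (phi x))) => // H.
  by exfalso; apply: nz; apply: HZc; exact: H.
pose Zc' := \bigcup_i (iter i T @^-1` Zc).
have mZc' : measurable Zc' by apply: bigcup_measurable => i _; exact: meas_iter.
have Zc'0 : m Zc' = 0%E.
  apply/eqP; rewrite eq_le measure_ge0 andbT.
  have := @measure_sigma_subadditive _ _ _ m Zc' (fun i => iter i T @^-1` Zc)
    (fun i => meas_iter i mZc) mZc' (@subset_refl _ _).
  by rewrite eseries0 // => i _ _; exact: (etrans (m_iter i mZc) Zc0).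
have [r r0 Hr] := oU g Ug.
pose mu := fine (m A).
have mAE : m A = mu%:E := mfin mA.
have mu0 : 0 < mu by rewrite -lte_fin -mAE.
pose c := mu / 16.
have c0 : 0 < c by rewrite divr_gt0.
pose eta := Order.min (r / 3) (Order.min c (1/2)).
have eta0 : 0 < eta by rewrite !lt_min !divr_gt0.
have etar : eta <= r / 3 by rewrite ge_min lexx.
have etac : eta <= c by rewrite ge_min ge_min lexx orbT.
have eta2 : eta <= 1/2 by rewrite ge_min ge_min lexx !orbT.
have [N1 HN1] := tail_small eps_ge0 epsfin eta0.
have [k0 Hk0] := HAg mA c0.
pose k := maxn N1 k0.
have tailk q : \sum_(k <= j < q) eps j <= eta.
  by apply: ltW; apply: HN1; exact: leq_maxl.
have epsj j : (k <= j)%N -> eps j < eta.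
  move=> kj; have := HN1 j j.+1 (leq_trans (leq_maxl _ _) kj).
  by rewrite big_nat1.
have epsk : eps k < eta by exact: epsj.
pose W := \bigcup_(j in [set j | (k <= j)%N]) Sbad j.
have mW : measurable W by apply: bigcup_measurable => j _; exact: mSbad.
have mWle : (m W <= (eta / (N k)%:R)%:E)%E.
  apply: le_trans.
    apply: (@measure_sigma_subadditive_tail _ _ _ m W Sbad k mSbad mW).
    move=> x [j /= kj Sj]; exists j => //= hjk; lia.
  apply: le_trans.
    apply: (@lee_nneseries _ _ (fun j => (eps j ^+ 2 / (N j)%:R)%:E)) => [n _ _|n _].
      exact: measure_ge0.
    exact: hbad n.
  apply: series_le => [j|M].
    by apply: divr_ge0; [rewrite exprn_ge0 // eps_ge0 | rewrite ler0n].
  apply: (@le_trans _ _ (\sum_(k <= j < M) eps j / (N k)%:R)).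
    apply: ler_sum_nat => j /andP [kj _].
    have a0 := eps_ge0 j; have a1 : eps j <= 1 by apply: ltW; apply: lt_le_trans (epsj j kj) _; apply: le_trans eta2 _; lra.
    have u0 : 0 <= (N j)%:R^-1 :> R by rewrite invr_ge0 ler0n.
    have uw : (N j)%:R^-1 <= (N k)%:R^-1 :> R.
      by rewrite lef_pV2 ?posrE ?ltr0n ?Npos // ler_nat; exact: Nmono.
    have sq : eps j ^+ 2 <= eps j by rewrite expr2; nra.
    move: a0 a1 u0 uw sq; set a := eps j; set u := (N j)%:R^-1; set w := (N k)%:R^-1.
    move=> a0 a1 u0 uw sq; nra.
  by rewrite -mulr_suml ler_wpM2r ?invr_ge0 ?ler0n.
pose E := \bigcup_(i in `I_(N k)) (iter i T @^-1` W).
have mE : measurable E by apply: bigcup_measurable => i _; exact: meas_iter.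
have mEle : (m E <= eta%:E)%E.
  rewrite /E bigcup_mkord.
  apply: le_trans.
    by apply: (@Boole_inequality _ _ _ m (fun i => iter i T @^-1` W) (N k)) => i _; exact: meas_iter.
  apply: (@le_trans _ _ (\sum_(i < N k) (eta / (N k)%:R)%:E)%E).
    by apply: lee_sum => i _; move: mWle; rewrite -(m_iter i mW).
  rewrite sumEFin sumr_const card_ord lee_fin -(mulr_natr (eta / (N k)%:R) (N k)) divfK //.
  by rewrite pnatr_eq0 -lt0n Npos.
pose B := E `|` Zc'.
have mB : measurable B by exact: measurableU.
have mBle : (m B <= eta%:E)%E.
  by apply: le_trans (mU2 mE mZc') _; rewrite Zc'0 adde0.

have Hevc : ((1 - eps k)%:E < m (\bigcup_(i in goodk k) alpha k i))%E := evc k.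
pose Gd := \bigcup_(i in goodk k) alpha k i.
have [ma Hdisj _] := Hpart k.
have mGd : measurable Gd by apply: bigcup_measurable => i _; exact: ma.
have [A' [[I [_ HA']] HAd]] := Hk0 k (leq_maxr _ _).
pose P := [set i | I i /\ goodk k i].
pose UP := \bigcup_(i in P) alpha k i.
have mA' : measurable A' by rewrite HA'; apply: bigcup_measurable => i _; exact: ma.
have mUP : measurable UP by apply: bigcup_measurable => i _; exact: ma.
have mAdA : measurable (A `\` A') by exact: measurableD.
have mA'dA : measurable (A' `\` A) by exact: measurableD.
have cover : A `<=` UP `|` (A `\` A') `|` ~` Gd.
  move=> x Ax; case: (pselect (A' x)) => hA'; last by left; right.
  case: (pselect (Gd x)) => hG; last by right.
  left; left; move: hA'; rewrite HA' => -[i Ii xi]; case: hG => j gj xj.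
  have ij : i = j.
    case: (pselect (i = j)) => // ne; exfalso.
    have : (alpha k i `&` alpha k j) x by split.
    by rewrite Hdisj.
  by exists i => //; split => //; rewrite ij.
have hGd1 : (m Gd + m (~` Gd) = 1)%E.
  rewrite -(mU mGd (measurableC mGd)) ?setICr // setUCr; exact: probability_setT.
have mU1 : measurable (UP `|` (A `\` A')) by apply: measurableU.
have hA1 : (m A <= m UP + m (A `\` A') + m (~` Gd))%E.
  apply: (@le_trans _ _ (m (UP `|` (A `\` A') `|` ~` Gd))).
    by apply: mle => //; apply: measurableU => //; exact: measurableC.
  apply: (@le_trans _ _ (m (UP `|` (A `\` A')) + m (~` Gd))%E).
    by apply: mU2 => //; exact: measurableC.
  by apply: leeD => //; apply: mU2.
have mAA : measurable ((A `\` A') `|` (A' `\` A)) by apply: measurableU.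
have hAd : (m (A `\` A') < c%:E)%E.
  apply: (@le_lt_trans _ _ (m ((A `\` A') `|` (A' `\` A)))) => //.
  by apply: mle => // x h; left.
have hA'd : (m (A' `\` A) < c%:E)%E.
  apply: (@le_lt_trans _ _ (m ((A `\` A') `|` (A' `\` A)))) => //.
  by apply: mle => // x h; right.
have triv F : (forall i, F i `<=` alpha k i) -> trivIset P F.
  move=> FS i j _ _ [x [Fi Fj]]; case: (pselect (i = j)) => // ne; exfalso.
  have : (alpha k i `&` alpha k j) x by split; [exact: FS|exact: FS].
  by rewrite Hdisj.
have [i [Pi Hi]] : exists i, P i /\
    (4%:E * (m (alpha k i `\` A) + m (alpha k i `&` B)) < m (alpha k i))%E.
  case: (pselect (exists i, P i /\
    (4%:E * (m (alpha k i `\` A) + m (alpha k i `&` B)) < m (alpha k i))%E)) => // Hno.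
  exfalso.
  have Hle i : P i -> (m (alpha k i) <= 4%:E * (m (alpha k i `\` A) + m (alpha k i `&` B)))%E.
    by move=> Pi; rewrite leNgt; apply/negP => hlt; apply: Hno; exists i; split.
  have e1 : m UP = (\sum_(i <oo | i \in P) m (alpha k i))%E.
    exact: (mbigcup (fun i _ => ma i) (triv _ (fun i => @subset_refl _ _))).
  have e2 : m (\bigcup_(i in P) (alpha k i `\` A)) = (\sum_(i <oo | i \in P) m (alpha k i `\` A))%E.
    apply: mbigcup; first by move=> j _; apply: measurableD.
    by apply: triv => j x [].
  have e3 : m (\bigcup_(i in P) (alpha k i `&` B)) = (\sum_(i <oo | i \in P) m (alpha k i `&` B))%E.
    apply: mbigcup; first by move=> j _; apply: measurableI.
    by apply: triv => j x [].
  have h4 : (m UP <= 4%:E * (m (A' `\` A) + m B))%E.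
    rewrite e1; apply: le_trans.
      apply: (@lee_nneseries _ _ (fun i => 4%:E * (m (alpha k i `\` A) + m (alpha k i `&` B)))%E)
        => [n _ _|n]; first exact: measure_ge0.
      by move/set_mem => Pn; exact: Hle.
    rewrite nneseriesZl; last by move=> n _; apply: adde_ge0; exact: measure_ge0.
    rewrite nneseriesD; [|by move=> n _ _; exact: measure_ge0|by move=> n _ _; exact: measure_ge0].
    rewrite -e2 -e3; apply: lee_wpmul2l; first by rewrite lee_fin.
    apply: leeD; apply: mle => //.
    - by apply: bigcup_measurable => j _; apply: measurableD.
    - move=> x [j [Ij _] [xj nAx]]; split => //; rewrite HA'; by exists j.
    - by apply: bigcup_measurable => j _; apply: measurableI.
    - by move=> x [j _ [_ Bx]].
  move: h4 hA1 hGd1 Hevc hAd hA'd mBle.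
  rewrite (mfin mUP) (mfin mA'dA) (mfin mB) mAE (mfin mAdA) (mfin (measurableC mGd)) (mfin mGd).
  rewrite -!EFinD -EFinM !lee_fin !lte_fin => h1 h2 /(congr1 fine) /= h3.
  have cmu : c = mu / 16 by [].
  move: h1 h2 h3 epsk etac c0 cmu; clear; lra.

case: Pi => Ii [D [psi [pt [psiN [DS [imS [Hcoc HaD]]]]]]].
have [mD mDpsi psi1 _ ptm] := pt.
pose a := alpha k i.
have ma' : measurable a := ma i.
pose RS S := D `&` [set x | S (ptmap T psi x)].
pose Y := (D `&` A `&` RS A) `\` B.
have mY : measurable Y.
  apply: measurableD => //; apply: measurableI; first exact: measurableI.
  exact: meas_RS.
have maA : measurable (a `\` A) by exact: measurableD.
have maD : measurable (a `\` D) by exact: measurableD.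
have maB : measurable (a `&` B) by exact: measurableI.
have mRS : measurable (RS (a `\` A)) by exact: meas_RS.
have cover2 : a `<=` (a `\` D) `|` (a `\` A) `|` (a `&` B) `|` RS (a `\` A) `|` Y.
  move=> x ax.
  case: (pselect (D x)) => Dx; last by do 4 left.
  case: (pselect (A x)) => Ax; last by do 3 left; right.
  case: (pselect (B x)) => Bx; first by do 2 left; right.
  have aR : a (ptmap T psi x) by apply: imS; exists x.
  case: (pselect (A (ptmap T psi x))) => AR; last by left; right.
  by right.
have hRS : (m (RS (a `\` A)) <= m (a `\` A))%E.
  have [mimg eqm] := ptm _ mRS (fun x (h : RS (a `\` A) x) => h.1).
  rewrite -eqm; apply: mle => //.
  by move=> y [x [_ hx] <-].
have m1 : measurable (a `\` D `|` a `\` A) by exact: measurableU.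
have m2 : measurable (a `\` D `|` a `\` A `|` a `&` B) by exact: measurableU.
have m3 : measurable (a `\` D `|` a `\` A `|` a `&` B `|` RS (a `\` A)) by exact: measurableU.
have hsum : (m a <= m (a `\` D) + m (a `\` A) + m (a `&` B) + m (RS (a `\` A)) + m Y)%E.
  apply: (@le_trans _ _ (m (a `\` D `|` a `\` A `|` a `&` B `|` RS (a `\` A) `|` Y))).
    by apply: mle => //; exact: measurableU.
  apply: le_trans; first exact: (mU2 m3 mY).
  apply: leeD => //; apply: le_trans; first exact: (mU2 m2 mRS).
  apply: leeD => //; apply: le_trans; first exact: (mU2 m1 maB).
  by apply: leeD => //; exact: mU2.
have yy0 : (0 < m Y)%E.
  have epsk2 : eps k <= 1 / 2 by apply: ltW; exact: lt_le_trans epsk eta2.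
  have al0 : 0 <= fine (m a) by apply: fine_ge0; exact: measure_ge0.
  have x10 : 0 <= fine (m (a `\` A)) by apply: fine_ge0; exact: measure_ge0.
  have y10 : 0 <= fine (m (a `&` B)) by apply: fine_ge0; exact: measure_ge0.
  have hm : eps k * fine (m a) <= 1 / 2 * fine (m a) by rewrite ler_wpM2r.
  move: hsum hRS HaD Hi.
  rewrite (mfin ma') (mfin maD) (mfin maA) (mfin maB) (mfin mRS) (mfin mY).
  rewrite -!EFinD -!EFinM !lee_fin !lte_fin => h1 h2 h3 h4.
  move: h1 h2 h3 h4 hm x10 y10 al0; clear; lra.
have [n Hpos] : exists n, (0 < m (Y `&` (D `&` psi @^-1` [set n])))%E.
  case: (pselect (exists n, (0 < m (Y `&` (D `&` psi @^-1` [set n])))%E)) => // Hno.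
  exfalso.
  have Hz n : m (Y `&` (D `&` psi @^-1` [set n])) = 0%E.
    by apply/eqP; rewrite eq_le measure_ge0 andbT leNgt; apply/negP => h; apply: Hno; exists n.
  have := @measure_sigma_subadditive _ _ _ m Y (fun n => Y `&` (D `&` psi @^-1` [set n]))
    (fun n => measurableI _ _ mY (mDpsi n)) mY.
  have cov3 : Y `<=` \bigcup_n (Y `&` (D `&` psi @^-1` [set n])).
    by move=> x Yx; exists (psi x) => //; split => //; split => //; case: Yx => -[[]].
  move=> /(_ cov3); rewrite eseries0; last by move=> j _ _; exact: Hz j.
  move=> h; have h' : (m Y <= 0)%E by exact: h.
  by move: (lt_le_trans yy0 h'); rewrite ltxx.
have n1 : (0 < n)%N.
  case: n Hpos => // Hpos; exfalso.
  move: Hpos; rewrite (_ : Y `&` (D `&` psi @^-1` [set 0%N]) = set0) ?measure0 ?ltxx //.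
  apply/seteqP; split => x // [_ [Dx /= p0]].
  by have := psi1 x Dx; rewrite p0.
exists n => //.
apply: lt_le_trans Hpos _; apply: mle.
- exact: measurableI _ _ mY (mDpsi n).
- apply: measurableI; first by apply: measurableI => //; exact: meas_iter.
  exact: (cocycle_meas Hn sc n mT mphi oU).
move=> x [[[[Dx Ax] [_ ARx]] nBx] [_ pn]].
split; first by split => //; move: ARx; rewrite /ptmap /= pn.
apply: Hr; rewrite /nball /=.
have Hc := Hcoc x Dx; move: Hc; rewrite /nball /= pn => Hc.
have nZ : ~ Zc' x by move=> hz; apply: nBx; right.
have nE : ~ E x by move=> hz; apply: nBx; left.
have hn : (n <= N k)%N by rewrite -pn; exact: psiN.
have Hcl : nrm (cocycle T phi n x - cocycle T (s k.+1) n x) <= (eta / (N k)%:R) *+ n.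
  apply: cocycle_close => j hj.
  apply: (phi_close (phi:=phi) (Zc:=Zc) (k:=k) (y:=iter j T x) (eta:=eta) cv _ _ tailk).
  - by move=> hz; apply: nZ; exists j.
  - move=> l kl; rewrite ltNge; apply/negP => hle; apply: nE; exists j.
      exact: leq_trans hj hn.
    by exists l.
have Hn' : (eta / (N k)%:R) *+ n <= eta.
  rewrite -(mulr_natr (eta / (N k)%:R) n) mulrAC ler_pdivrMr ?ltr0n ?Npos //.
  by rewrite ler_wpM2l ?ler_nat // ltW.
apply: le_lt_trans (nrm_tri Hn _ (cocycle T (s k.+1) n x) _) _.
exact: fin_ineq eta0 (le_trans Hcl Hn') Hc epsk etar.
Qed.

Lemma aeP (P : X -> Prop) (Z : set X) : measurable Z -> m Z = 0%E ->
  (forall x, ~ Z x -> P x) -> {ae m, forall x, P x}.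
Proof.
move=> mZ Z0 H; exists Z; split => // x /= nP.
by case: (pselect (Z x)) => // nz; exfalso; exact: nP (H x nz).
Qed.

Lemma main_all :
  {ae m, forall x, (\sum_(0 <= k <oo) (nrm (f k (T x) - f k x))%:E < +oo)%E}
  /\ (exists phi : X -> G, nmeasurable nrm phi /\
        {ae m, forall x, nconverges nrm
                 (fun n => \sum_(k < n) (f k (T x) - f k x)) (phi x)})
  /\ (forall phi : X -> G, nmeasurable nrm phi ->
        {ae m, forall x, nconverges nrm
                 (fun n => \sum_(k < n) (f k (T x) - f k x)) (phi x)} ->
        essential_value m T nrm phi g).
Proof.
split; [|split].
- by apply: (aeP mZ0 Z0null) => x nz; exact: sum_fin nz.
- pose L x := xget 0 [set l | nconverges nrm (fun n => s n x) l].
  have cvL x : ~ Z0 x -> nconverges nrm (fun n => s n x) (L x).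
    by move=> nz; exact: (xgetPex 0 (conv_s nz)).
  exists (fun x => if pselect (Z0 x) then 0 else L x); split.
    exact: (nmeas_lim Hn ms mZ0 cvL).
  apply: (aeP mZ0 Z0null) => x nz /=; case: (pselect (Z0 x)) => // h.
  exact: cvL.
- by move=> phi mphi ae; exact: partC.
Qed.

End Main.

Theorem theorem3p6 (d : measure_display) (X : measurableType d)
  (R : realType) (m : probability X R) (T : X -> X)
  (G : zmodType) (nrm : G -> R) (g : G)
  (alpha : nat -> nat -> set X) (N : nat -> nat) (eps : nat -> R)
  (f : nat -> X -> G) :
  standard_borel X R ->
  invertible_mpt m T -> ergodic m T ->
  lcsc_normed_group nrm ->
  (forall k, mpartition (alpha k)) -> approx_generate m alpha ->
  (forall k, (0 < N k)%N) -> {homo N : a b / (a <= b)%N} ->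
  (forall M, exists k, (M <= N k)%N) ->
  (forall k, 0 < eps k) -> (\sum_(0 <= k <oo) (eps k)%:E < +oo)%E ->
  (forall k, nmeasurable nrm (f k)) ->
  (forall k, EVC m T (fun x => \sum_(j < k.+1) (f j (T x) - f j x))
                 (nball nrm g (eps k)) (eps k) (alpha k) (N k)) ->
  (forall k, (m [set x | (eps k / (N k)%:R <= nrm (f k.+1 (T x) - f k.+1 x))%R]
              <= (eps k ^+ 2 / (N k)%:R)%:E)%E) ->
  {ae m, forall x, (\sum_(0 <= k <oo) (nrm (f k (T x) - f k x))%:E < +oo)%E}
  /\ (exists phi : X -> G, nmeasurable nrm phi /\
        {ae m, forall x, nconverges nrm
                 (fun n => \sum_(k < n) (f k (T x) - f k x)) (phi x)})
  /\ (forall phi : X -> G, nmeasurable nrm phi ->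
        {ae m, forall x, nconverges nrm
                 (fun n => \sum_(k < n) (f k (T x) - f k x)) (phi x)} ->
        essential_value m T nrm phi g).
Proof.
move=> _ [mT _ mpT] _ [Hn lc sc] Hpart HAg Npos Nmono _ eps0 epsfin mf evc hbad.
exact: (main_all Hn sc lc mT mpT Npos Nmono eps0 epsfin mf hbad Hpart HAg evc).
Qed.
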